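(* For every indexed grammar $G$ there is a grounded indexed grammar $G'$ such that $L(G') = L(G)$.
   Context: An indexed grammar is a tuple $G=(N,T,F,P,S)$ where $N$ (nonterminals), $T$ (terminals), $F$ (stack symbols) are finite alphabets, $S\in N$ is the start symbol, and $P$ is a finite set of productions of the forms $A\to r$, $A\to Bf$, $Af\to r$ with $A,B\in N$, $f\in F$, $r\in(N\cup T)^*$. Sentential forms are strings over $NF^*\cup T$; in $Af_1\cdots f_k$ the string $f_1\cdots f_k$ is the stack of $A$ with $f_1$ on top. For $r\in(N\cup T)^*$ and $x\in F^*$, $r\{x\}$ denotes $r$ with every $A\in N$ replaced by $Ax$. One writes $q\to r$ if $q=q_1\,Ax\,q_2$ and $r=q_1\,p\{y\}\,q_2$ for some $q_1,q_2\in(NF^*\cup T)^*$, $A\in N$, $x,y\in F^*$, $p\in (N\cup T)^*$, where either (1) $A\to p\in P$ and $y=x$, or (2) $p=B\in N$, $A\to Bf\in P$ and $y=fx$, or (3) $Af\to p\in P$ and $x=fy$. Let $\xrightarrow{*}$ be the reflexive transitive closure; $L(Ax)=\{s\in T^*: Ax\xrightarrow{*}s\}$ and $L(G)=L(S)$ (start symbol with empty stack). $G$ is grounded if there is a symbol $\$\in F$ (bottom-of-stack symbol) such that every production of $P$ has one of the forms $S\to A\$$, $A\to r$, $A\to Bf$, $Af\to r$, $A\$\to s$, with $A,B\in N\setminus\{S\}$, $f\in F\setminus\{\$\}$, $r\in(N\setminus\{S\})^+$, $s\in T^*$. *)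

(* Defs.v *)
From mathcomp Require Import all_boot.
Set Implicit Arguments. Unset Strict Implicit. Unset Printing Implicit Defensive.

Fixpoint InL {A : Type} (a : A) (l : seq A) : Prop :=
  match l with [::] => False | b :: m => b = a \/ InL a m end.

Section IndexedGrammar.
Variables (N T F : finType).

(* Productions:  A -> r,   A -> B f,   A f -> r   with r in (N u T)^* *)
Inductive production :=
  | PRule of N & seq (N + T)
  | PPush of N & N & F
  | PPop  of N & F & seq (N + T).

Record indexed_grammar := IndexedGrammar {
  ig_prods : seq production;
  ig_start : N }.

(* sentential-form symbols: A x (nonterminal with stack x, top = head) or a terminal *)
Definition sym := (N * seq F + T)%type.

Definition attach (p : seq (N + T)) (x : seq F) : seq sym :=
  map (fun s => match s with inl B => inl (B, x) | inr t => inr t end) p.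

Definition step (G : indexed_grammar) (q r : seq sym) : Prop :=
  exists (q1 q2 : seq sym) (A : N) (x : seq F),
    q = q1 ++ inl (A, x) :: q2 /\
    ( (exists p, InL (PRule A p) (ig_prods G) /\ r = q1 ++ attach p x ++ q2)
   \/ (exists B f, InL (PPush A B f) (ig_prods G) /\
                   r = q1 ++ inl (B, f :: x) :: q2)
   \/ (exists f y p, InL (PPop A f p) (ig_prods G) /\ x = f :: y /\
                     r = q1 ++ attach p y ++ q2) ).

Inductive derives (G : indexed_grammar) : seq sym -> seq sym -> Prop :=
  | derives_refl q : derives G q q
  | derives_step q r s : step G q r -> derives G r s -> derives G q s.

Definition lang_of (G : indexed_grammar) (A : N) (x : seq F) (w : seq T) : Prop :=
  derives G [:: inl (A, x)] (map (@inr (N * seq F) T) w).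

Definition lang (G : indexed_grammar) (w : seq T) : Prop :=
  lang_of G (ig_start G) [::] w.

Definition nonempty_nonterm_word (S : N) (r : seq (N + T)) : Prop :=
  r <> [::] /\ forall s, InL s r -> exists B, s = inl B /\ B <> S.

Definition terminal_word (r : seq (N + T)) : Prop :=
  forall s, InL s r -> exists t, s = inr t.

Definition grounded (G : indexed_grammar) : Prop :=
  let S := ig_start G in
  exists bot : F, forall pr, InL pr (ig_prods G) ->
       (exists A, pr = PPush S A bot /\ A <> S)
    \/ (exists A r, pr = PRule A r /\ A <> S /\ nonempty_nonterm_word S r)
    \/ (exists A B f, pr = PPush A B f /\ A <> S /\ B <> S /\ f <> bot)
    \/ (exists A f r, pr = PPop A f r /\ A <> S /\ f <> bot /\
                      nonempty_nonterm_word S r)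
    \/ (exists A s, pr = PPop A bot s /\ A <> S /\ terminal_word s).

End IndexedGrammar.

(* Main.v *)
Require Import Defs.
From mathcomp Require Import all_boot.
Set Implicit Arguments. Unset Strict Implicit. Unset Printing Implicit Defensive.

Section Generic.
Variable A : Type.
Lemma InL_cat (x : A) s1 s2 : InL x (s1 ++ s2) <-> InL x s1 \/ InL x s2.
Proof. elim: s1 => [|b s IH] /=; [tauto| move: IH; tauto]. Qed.
Lemma InL_map (B : Type) (f : A -> B) y s :
  InL y (map f s) -> exists x, InL x s /\ y = f x.
Proof.
elim: s => [|b s IH] //= [<-|/IH [x [H ->]]]; first by exists b; auto.
by exists x; auto.
Qed.
Lemma InL_map_intro (B : Type) (f : A -> B) x s : InL x s -> InL (f x) (map f s).
Proof. elim: s => [|b s IH] //= [->|H]; [left|right; apply: IH] => //. Qed.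
Lemma InL_flatten (x : A) ss : InL x (flatten ss) -> exists s, InL s ss /\ InL x s.
Proof.
elim: ss => [|s ss IH] //= /InL_cat [H|/IH [s' [H1 H2]]].
  by exists s; auto.
by exists s'; auto.
Qed.
Lemma InL_flatten_intro (x : A) s ss : InL s ss -> InL x s -> InL x (flatten ss).
Proof.
elim: ss => [|s' ss IH] //= [->|H] Hx; apply/InL_cat; [left|right; apply: IH] => //.
Qed.
End Generic.

Lemma InL_mem (X : eqType) (x : X) s : x \in s -> InL x s.
Proof. elim: s => [|b s IH] //=; rewrite inE => /orP [/eqP ->|/IH]; auto. Qed.

Section Deriv.
Variables (N T F : finType) (G : indexed_grammar N T F).

Lemma derives_trans q r s : derives G q r -> derives G r s -> derives G q s.
Proof. elim => [//|q0 r0 s0 H _ IH] Hs; apply: derives_step H (IH Hs). Qed.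

Lemma step_ctx q r l m : step G q r -> step G (l ++ q ++ m) (l ++ r ++ m).
Proof.
case=> q1 [q2 [A [x [-> H]]]].
exists (l ++ q1), (q2 ++ m), A, x; split; first by rewrite -!catA.
case: H => [[p [Hp ->]]|[[B [f [Hp ->]]]|[f [y [p [Hp [Hx ->]]]]]]].
- by left; exists p; split => //; rewrite -!catA.
- by right; left; exists B, f; split => //; rewrite -!catA.
- by right; right; exists f, y, p; split => //; split => //; rewrite -!catA.
Qed.

Lemma derives_ctx q r l m : derives G q r -> derives G (l ++ q ++ m) (l ++ r ++ m).
Proof.
elim => [q0|q0 r0 s0 H _ IH]; first by apply: derives_refl.
exact: derives_step (step_ctx l m H) IH.
Qed.

Lemma derives_cat a b c d : derives G a b -> derives G c d -> derives G (a ++ c) (b ++ d).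
Proof.
move=> H1 H2; apply: (@derives_trans _ (b ++ c)).
  by have := derives_ctx [::] c H1; rewrite /= .
by have := derives_ctx b [::] H2; rewrite !cats0.
Qed.
End Deriv.

Section Construction.
Variables (N T F : finType) (G : indexed_grammar N T F).
Local Notation N' := (N + option T + unit)%type.
Local Notation F' := (option F).
Local Notation S := (ig_start G).

Definition nA (A : N) : N' := inl (inl A).
Definition Xt (t : T) : N' := inl (inr (Some t)).
Definition Ee : N' := inl (inr None).
Definition Sp : N' := inr tt.

Definition trs (s : N + T) : N' + T :=
  match s with inl B => inl (nA B) | inr t => inl (Xt t) end.
Definition tr (p : seq (N + T)) : seq (N' + T) :=
  if p is [::] then [:: inl Ee] else map trs p.
Definition trans (pr : production N T F) : production N' T F' :=
  match pr with
  | PRule A p => PRule F' (nA A) (tr p)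
  | PPush A B f => PPush T (nA A) (nA B) (Some f)
  | PPop A f p => PPop (nA A) (Some f) (tr p)
  end.
Definition termrules (t : T) : seq (production N' T F') :=
  PPop (Xt t) None [:: inr t] ::
  map (fun f => PPop (Xt t) (Some f) [:: inl (Xt t)]) (enum F).
Definition erules : seq (production N' T F') :=
  PPop Ee None [::] :: map (fun f => PPop Ee (Some f) [:: inl Ee]) (enum F).
Definition prods' : seq (production N' T F') :=
  PPush T Sp (nA S) None :: map trans (ig_prods G) ++
  flatten (map termrules (enum T)) ++ erules.
Definition G' : indexed_grammar N' T F' := IndexedGrammar prods' Sp.

Lemma prods'_inv pr : InL pr prods' ->
     pr = PPush T Sp (nA S) None
  \/ (exists pr0, InL pr0 (ig_prods G) /\ pr = trans pr0)
  \/ (exists t, pr = PPop (Xt t) None [:: inr t])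
  \/ (exists t f, pr = PPop (Xt t) (Some f) [:: inl (Xt t)])
  \/ pr = PPop Ee None [::]
  \/ (exists f, pr = PPop Ee (Some f) [:: inl Ee]).
Proof.
rewrite /prods' /= => H. case: H => [e|]; first by subst; left.
move/InL_cat; case=> [H|].
  case: (InL_map H) => pr0 [H0 e]; by right; left; exists pr0.
move/InL_cat; case=> [H|].
  case: (InL_flatten H) => s [Hs1 Hs2].
  case: (InL_map Hs1) => t [_ e]; subst s.
  move: Hs2 => /= [e|Hs2].
    by subst; right; right; left; exists t.
  case: (InL_map Hs2) => f [_ e].
  by right; right; right; left; exists t, f.
move=> /= [e|H].
  by subst; do 4 right; left.
case: (InL_map H) => f [_ e].
by do 5 right; exists f.
Qed.

Lemma tr_nnw p : nonempty_nonterm_word Sp (tr p).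
Proof.
case: p => [|a p] /=.
  by split => // s /= [e|//]; subst; exists Ee.
split => // s H; case: (@InL_map _ _ trs s (a :: p) H) => x [_ e]; subst s; clear H; case: x => [B|t] /=.
  by exists (nA B).
by exists (Xt t).
Qed.

Lemma G'_grounded : grounded G'.
Proof.
exists None => pr /prods'_inv.
case=> [->|[[pr0 [_ ->]]|[[t ->]|[[t [f ->]]|[->|[f ->]]]]]].
- by left; exists (nA S).
- case: pr0 => [A p|A B f|A f p] /=.
  + right; left; exists (nA A), (tr p); do 2 split => //; exact: tr_nnw.
  + by right; right; left; exists (nA A), (nA B), (Some f).
  + right; right; right; left; exists (nA A), (Some f), (tr p).
    do 3 split => //; exact: tr_nnw.
- do 4 right; exists (Xt t), [:: inr t]; do 2 split => //.
  by move=> s /= [e|//]; subst; exists t.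
- do 3 right; left; exists (Xt t), (Some f), [:: inl (Xt t)]; do 3 split => //.
  by split => // s /= [e|//]; subst; exists (Xt t).
- by do 4 right; exists Ee, [::]; do 2 split => //.
- do 3 right; left; exists Ee, (Some f), [:: inl Ee]; do 3 split => //.
  by split => // s /= [e|//]; subst; exists Ee.
Qed.

Definition emb (s : sym N T F) : sym N' T F' :=
  match s with
  | inl (A, x) => inl (nA A, map Some x ++ [:: None])
  | inr t => inr t
  end.

Lemma in_X_none t : InL (PPop (Xt t) None [:: inr t]) prods'.
Proof.
rewrite /prods' /=; right; apply/InL_cat; right; apply/InL_cat; left.
apply: (@InL_flatten_intro _ _ (termrules t)).
  by apply: InL_map_intro; apply: InL_mem; rewrite mem_enum.
by left.
Qed.

Lemma in_X_some t f : InL (PPop (Xt t) (Some f) [:: inl (Xt t)]) prods'.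
Proof.
rewrite /prods' /=; right; apply/InL_cat; right; apply/InL_cat; left.
apply: (@InL_flatten_intro _ _ (termrules t)).
  by apply: InL_map_intro; apply: InL_mem; rewrite mem_enum.
right; apply: (@InL_map_intro _ _ (fun f => PPop (Xt t) (Some f) [:: inl (Xt t)])).
by apply: InL_mem; rewrite mem_enum.
Qed.

Lemma in_E_none : InL (PPop Ee None [::]) prods'.
Proof.
rewrite /prods' /=; right; apply/InL_cat; right; apply/InL_cat; right.
by left.
Qed.

Lemma in_E_some f : InL (PPop Ee (Some f) [:: inl Ee]) prods'.
Proof.
rewrite /prods' /=; right; apply/InL_cat; right; apply/InL_cat; right.
right; apply: (@InL_map_intro _ _ (fun f => PPop Ee (Some f) [:: inl Ee])).
by apply: InL_mem; rewrite mem_enum.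
Qed.

Lemma in_trans pr : InL pr (ig_prods G) -> InL (trans pr) prods'.
Proof.
move=> H; rewrite /prods' /=; right; apply/InL_cat; left; exact: InL_map_intro.
Qed.

Lemma erase_X t x :
  derives G' [:: inl (Xt t, map Some x ++ [:: None])] [:: inr t].
Proof.
elim: x => [|f x IH] /=.
  apply: (@derives_step _ _ _ _ _ [:: inr t]); last exact: derives_refl.
  exists [::], [::], (Xt t), [:: None]; split => //.
  by right; right; exists None, [::], [:: inr t]; split; [exact: in_X_none|].
apply: (derives_step _ IH).
exists [::], [::], (Xt t), (Some f :: (map Some x ++ [:: None])); split => //.
right; right; exists (Some f), (map Some x ++ [:: None]), [:: inl (Xt t)].
by split; [exact: in_X_some|].
Qed.

Lemma erase_E x :
  derives G' [:: inl (Ee, map Some x ++ [:: None])] [::].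
Proof.
elim: x => [|f x IH] /=.
  apply: (@derives_step _ _ _ _ _ [::]); last exact: derives_refl.
  exists [::], [::], Ee, [:: None]; split => //.
  by right; right; exists None, [::], [::]; split; [exact: in_E_none|].
apply: (derives_step _ IH).
exists [::], [::], Ee, (Some f :: (map Some x ++ [:: None])); split => //.
right; right; exists (Some f), (map Some x ++ [:: None]), [:: inl Ee].
by split; [exact: in_E_some|].
Qed.

Lemma attach_trs p x :
  derives G' (attach (map trs p) (map Some x ++ [:: None])) (map emb (attach p x)).
Proof.
elim: p => [|a p IH] /=; first exact: derives_refl.
case: a => [B|t] /=.
  exact: (derives_cat (derives_refl G' [:: inl (nA B, map Some x ++ [:: None])]) IH).
exact: (derives_cat (erase_X t x) IH).
Qed.

Lemma attach_tr p x :
  derives G' (attach (tr p) (map Some x ++ [:: None])) (map emb (attach p x)).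
Proof. case: p => [|a p]; [exact: erase_E | exact: attach_trs]. Qed.

Lemma step_emb q r : step G q r -> derives G' (map emb q) (map emb r).
Proof.
case=> q1 [q2 [A [x [-> H]]]].
case: H => [[p [Hp ->]]|[[B [f [Hp ->]]]|[f [y [p [Hp [Hx ->]]]]]]].
- rewrite !map_cat /=.
  apply: (@derives_step _ _ _ _ _
     (map emb q1 ++ attach (tr p) (map Some x ++ [:: None]) ++ map emb q2)).
    exists (map emb q1), (map emb q2), (nA A), (map Some x ++ [:: None]).
    split => //; left; exists (tr p); split => //.
    exact: (in_trans Hp).
  exact: derives_ctx (attach_tr p x).
- rewrite !map_cat /=.
  apply: (@derives_step _ _ _ _ _
     (map emb q1 ++ inl (nA B, Some f :: (map Some x ++ [:: None])) :: map emb q2)).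
    exists (map emb q1), (map emb q2), (nA A), (map Some x ++ [:: None]).
    split => //; right; left; exists (nA B), (Some f); split => //.
    exact: (in_trans Hp).
  exact: derives_refl.
- subst x; rewrite !map_cat /=.
  apply: (@derives_step _ _ _ _ _
     (map emb q1 ++ attach (tr p) (map Some y ++ [:: None]) ++ map emb q2)).
    exists (map emb q1), (map emb q2), (nA A), (Some f :: (map Some y ++ [:: None])).
    split => //; right; right; exists (Some f), (map Some y ++ [:: None]), (tr p).
    split; first exact: (in_trans Hp).
    by [].
  exact: derives_ctx (attach_tr p y).
Qed.

Lemma derives_emb q r : derives G q r -> derives G' (map emb q) (map emb r).
Proof.
elim => [q0|q0 r0 s0 H _ IH]; first exact: derives_refl.
exact: derives_trans (step_emb H) IH.
Qed.

Lemma forward w : lang G w -> lang G' w.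
Proof.
move=> H; have := derives_emb H.
have -> : map emb (map inr w) = map inr w by elim: w {H} => //= t w ->.
move=> H'.
apply: (@derives_step _ _ _ _ _ [:: inl (nA S, [:: None])]) H'.
exists [::], [::], Sp, [::]; split => //.
by right; left; exists (nA S), None; split => //; left.
Qed.

Definition strip (y : seq F') : seq F := pmap id y.
Definition backsym (s : sym N' T F') : seq (sym N T F) :=
  match s with
  | inl (a, y) =>
      match a with
      | inl (inl A) => [:: inl (A, strip y)]
      | inl (inr (Some t)) => [:: inr t]
      | inl (inr None) => [::]
      | inr _ => [:: inl (S, strip y)]
      end
  | inr t => [:: inr t]
  end.
Definition backL (q : seq (sym N' T F')) : seq (sym N T F) :=
  flatten (map backsym q).

Lemma backL_cat a b : backL (a ++ b) = backL a ++ backL b.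
Proof. by rewrite /backL map_cat flatten_cat. Qed.

Lemma back_attach_trs p y : backL (attach (map trs p) y) = attach p (strip y).
Proof. by elim: p => [|[B|t] p IH] //=; rewrite -IH. Qed.

Lemma back_attach p y : backL (attach (tr p) y) = attach p (strip y).
Proof. case: p => [|a p] //; exact: back_attach_trs. Qed.

Lemma step_back q r : step G' q r -> backL q = backL r \/ step G (backL q) (backL r).
Proof.
case=> q1 [q2 [A [x [-> H]]]].
case: H => [[p [Hp ->]]|[[B [f [Hp ->]]]|[f [y [p [Hp [Hx ->]]]]]]].
- case: (prods'_inv Hp) => [//|[[pr0 [H0 e]]|[[t //]|[[t [f //]]|[//|[f //]]]]]].
  case: pr0 H0 e => [A0 p0|A0 B0 f0|A0 f0 p0] H0 //= [eA ep]; subst.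
  right; exists (backL q1), (backL q2), A0, (strip x).
  rewrite !backL_cat /=; split => //.
  by left; exists p0; split => //; rewrite back_attach.
- case: (prods'_inv Hp) => [[eA eB ef]|[[pr0 [H0 e]]|[[t //]|[[t [f' //]]|[//|[f' //]]]]]].
    by subst; left; rewrite !backL_cat.
  case: pr0 H0 e => [A0 p0|A0 B0 f0|A0 f0 p0] H0 //= [eA eB ef]; subst.
  right; exists (backL q1), (backL q2), A0, (strip x).
  rewrite !backL_cat /=; split => //.
  by right; left; exists B0, f0.
- subst x.
  case: (prods'_inv Hp) => [//|[[pr0 [H0 e]]|[[t [eA ef ep]]|[[t [f' [eA ef ep]]]|[[eA ef ep]|[f' [eA ef ep]]]]]]].
  + case: pr0 H0 e => [A0 p0|A0 B0 f0|A0 f0 p0] H0 //= [eA ef ep]; subst.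
    right; exists (backL q1), (backL q2), A0, (f0 :: strip y).
    rewrite !backL_cat /=; split => //.
    right; right; exists f0, (strip y), p0; split => //; split => //.
    by rewrite back_attach.
  + by subst; left; rewrite !backL_cat.
  + by subst; left; rewrite !backL_cat.
  + by subst; left; rewrite !backL_cat.
  + by subst; left; rewrite !backL_cat.
Qed.

Lemma derives_back q r : derives G' q r -> derives G (backL q) (backL r).
Proof.
elim => [q0|q0 r0 s0 H _ IH]; first exact: derives_refl.
case: (step_back H) => [->//|H']; exact: derives_step H' IH.
Qed.

Lemma backward w : lang G' w -> lang G w.
Proof.
move=> H; have H' := derives_back H.
have e : backL (map (@inr (N' * seq F') T) w) = map (@inr (N * seq F) T) w.
  rewrite /backL; by elim: w {H H'} => //= t w ->.
by rewrite e in H'.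
Qed.
End Construction.

Theorem proposition1 (N T F : finType) (G : indexed_grammar N T F) :
  exists (N' F' : finType) (G' : indexed_grammar N' T F'),
    grounded G' /\ forall w : seq T, lang G' w <-> lang G w.
Proof.
exists (N + option T + unit)%type, (option F), (G' G); split.
  exact: G'_grounded.
by move=> w; split; [apply: backward | apply: forward].
Qed.
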